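(* Let $P$ be an $n$-element poset with connected components $P_1,\ldots,P_r$, and let $n_i=|P_i|$. If for each $i$ the poset $P_i$ has at most $(n_i-1)!$ tangled labelings, then $P$ has at most $(n-r)(n-2)!$ tangled labelings.
   Context: A labeling of an $m$-element poset is a bijection to $[m]$; a linear extension is a labeling with $x<y\Rightarrow L(x)<L(y)$. Promotion $\partial$: for non-maximal $y$, the $L$-successor of $y$ is the element greater than $y$ with minimal label; the promotion chain is $v_1=L^{-1}(1)$, $v_{i+1}$ the $L$-successor of $v_i$, ending at the first maximal $v_p$; $\partial(L)(y)=L(y)-1$ off the chain, $\partial(L)(v_i)=L(v_{i+1})-1$ for $i<p$, $\partial(L)(v_p)=m$. The sorting time of $L$ is the least $k\ge0$ with $\partial^k(L)$ a linear extension; a labeling of an $m$-element poset is tangled if its sorting time is $m-1$. Connected components are those of the Hasse diagram. *)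

(* Defs.v *)
From mathcomp Require Import all_boot.
Set Implicit Arguments. Unset Strict Implicit. Unset Printing Implicit Defensive.

Section Poset.
Variables (T : finType) (le : rel T).

Definition is_poset : Prop :=
  [/\ reflexive le, antisymmetric le & transitive le].

Definition plt (x y : T) : bool := (x != y) && le x y.

(* Labelings take values in 'I_#|T|: label k (0-based) stands for k+1 in [m]. *)
Definition labeling := {ffun T -> 'I_#|T|}.

Definition is_linext (L : labeling) : bool :=
  [forall x, forall y, plt x y ==> (L x < L y)].

Definition Lsucc (L : labeling) (y : T) : option T :=
  [pick z | plt y z & [forall w, plt y w ==> (L z <= L w)]].

Fixpoint chain_from (L : labeling) (k : nat) (v : T) : seq T :=
  match k with
  | 0 => [::]
  | k'.+1 => v :: (if Lsucc L v is Some w then chain_from L k' w else [::])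
  end.

(* promotion chain v_1 = L^-1(1), v_2, ..., v_p (v_p the first maximal one) *)
Definition pchain (L : labeling) : seq T :=
  if [pick v | val (L v) == 0] is Some v then chain_from L #|T| v else [::].

Definition promote_val (L : labeling) (y : T) : nat :=
  let c := pchain L in
  if y \in c then
    let i := index y c in
    if i.+1 < size c then val (L (nth y c i.+1)) - 1 else #|T| - 1
  else val (L y) - 1.

Definition promote (L : labeling) : labeling :=
  [ffun y => insubd (L y) (promote_val L y)].

(* sorting time of L equals |P| - 1 *)
Definition tangled (L : labeling) : bool :=
  [&& injectiveb L,
      is_linext (iter #|T|.-1 promote L) &
      [forall k : 'I_#|T|.-1, ~~ is_linext (iter k promote L)]].

Definition ntangled : nat := #|[set L : labeling | tangled L]|.

Definition covers (x y : T) : bool :=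
  plt x y && [forall z, ~~ (plt x z && plt z y)].
Definition hasse : rel T := fun x y => covers x y || covers y x.
Definition components : {set {set T}} :=
  [set [set y | connect hasse x y] | x : T].

End Poset.

Definition restr (T : finType) (le : rel T) (C : {set T}) :
  rel {x : T | x \in C} := fun x y => le (val x) (val y).
Arguments restr {T} le C.

(* Main.v *)
Require Import Defs.
From mathcomp Require Import all_boot zify.
Set Implicit Arguments. Unset Strict Implicit. Unset Printing Implicit Defensive.

Ltac nlia T := (try set mm := #|T| in * ); lia.

Section Basic.
Variables (T : finType) (le : rel T).
Hypothesis Hpo : is_poset le.

Local Notation plt := (plt le).
Local Notation n := #|T|.

Lemma plt_irr : irreflexive plt.
Proof. by move=> x; rewrite /Defs.plt eqxx. Qed.

Lemma plt_trans : transitive plt.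
Proof.
case: Hpo => _ anti tr y x z /andP[nxy lxy] /andP[nyz lyz].
rewrite /Defs.plt (tr _ _ _ lxy lyz) andbT.
apply/eqP => exz; subst z; move/eqP: nxy; apply; apply: anti; by rewrite lxy lyz.
Qed.

Lemma LsuccP (L : labeling T) y z : Lsucc le L y = Some z ->
  plt y z /\ forall w, plt y w -> L z <= L w.
Proof.
rewrite /Lsucc; case: pickP => // z' /andP[p /forallP H] [<-]; split => // w pw.
exact: (implyP (H w)).
Qed.

Lemma Lsucc_none (L : labeling T) y : Lsucc le L y = None -> forall w, ~~ plt y w.
Proof.
rewrite /Lsucc; case: pickP => // H _ w; apply/negP => pw.
case: (arg_minnP (fun z => (L z : nat)) pw) => z pz zmin.
have := H z; rewrite pz /= => /negbT/negP; apply; apply/forallP => w'.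
by apply/implyP => pw'; exact: zmin.
Qed.

Lemma Lsucc_eq (L : labeling T) y z : injective L -> plt y z ->
  (forall w, plt y w -> L z <= L w) -> Lsucc le L y = Some z.
Proof.
move=> inj pz zm; case E: (Lsucc le L y) => [z'|].
  have [pz' zm'] := LsuccP E; congr Some; apply: inj; apply/val_inj/eqP.
  by rewrite eqn_leq zm' ?zm.
by move: (Lsucc_none E z); rewrite pz.
Qed.

Definition srel (L : labeling T) : rel T := fun a b => Lsucc le L a == Some b.

Lemma srel_plt L a b : srel L a b -> plt a b.
Proof. by move/eqP/LsuccP=> []. Qed.

Lemma cf_path L k v : path (srel L) v (behead (chain_from le L k v)).
Proof.
elim: k v => [|k IH] v //=. case E: (Lsucc le L v) => [w|] //.
case: k IH => [|k] IH //=. rewrite /srel E eqxx /=. exact: (IH w).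
Qed.

Lemma cf_uniq L k v : uniq (chain_from le L k v).
Proof.
case: k => [|k] //; have := cf_path L k.+1 v => p.
apply: (sorted_uniq plt_trans plt_irr).
rewrite [chain_from _ _ _ _]/= /=. 
exact: (sub_path (@srel_plt L) p).
Qed.

Lemma cf_size L k v : size (chain_from le L k v) <= n.
Proof. by move/card_uniqP: (cf_uniq L k v) <-; exact: max_card. Qed.

Lemma cf_stable L k v : size (chain_from le L k.+1 v) <= k ->
  chain_from le L k.+1 v = chain_from le L k v.
Proof.
elim: k v => [|k IH] v; first by [].
rewrite [chain_from _ _ k.+2 v]/= [chain_from _ _ k.+1 v]/=.
case E: (Lsucc le L v) => [w|] //= H. by rewrite -IH.
Qed.

Lemma cf_fuel L k v : n <= k -> chain_from le L k v = chain_from le L n v.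
Proof.
elim: k => [|k IH] lnk; first by have -> : n = 0 by lia.
case: (ltnP n k.+1) => h; last by have -> : n = k.+1 by lia.
have h' : n <= k by lia.
rewrite cf_stable; first exact: IH.
by apply: leq_trans (cf_size L k.+1 v) _.
Qed.

Lemma cf_full L k v :
  Lsucc le L (last v (behead (chain_from le L k.+1 v))) = None \/
  size (chain_from le L k.+1 v) = k.+1.
Proof.
elim: k v => [|k IH] v /=; first by case: (Lsucc le L v); right.
case E: (Lsucc le L v) => [w|] /=; last by left.
by case: (IH w) => /= H; [left|right; rewrite H].
Qed.


Lemma lab_surj (L : labeling T) : injective L -> forall i : 'I_n, exists y, L y = i.
Proof.
move=> inj i; have hc : #|'I_n| <= #|T| by rewrite card_ord.
by have /codomP[y ->] := inj_card_onto inj hc i; exists y.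
Qed.

Section ChainSpec.
Variables (L : labeling T) (v1 : T).
Hypotheses (inj : injective L) (H0 : L v1 = 0 :> nat).

Lemma npos : 0 < n.
Proof. by apply/card_gt0P; exists v1. Qed.

Lemma pchain_eq : exists s, pchain le L = v1 :: s /\ path (srel L) v1 s /\
  Lsucc le L (last v1 s) = None.
Proof.
have np := npos.
rewrite /pchain; case: pickP => [v /eqP Hv|H]; last by move: (H v1); rewrite /= H0 eqxx.
have -> : v = v1 by apply: inj; apply: val_inj; rewrite /= Hv H0.
have -> : chain_from le L n v1 = chain_from le L n.-1.+1 v1 by rewrite prednK.
exists (behead (chain_from le L n.-1.+1 v1)); split; first by [].
split; first exact: cf_path.
have E : chain_from le L n.-1.+2 v1 = chain_from le L n.-1.+1 v1.
  rewrite (@cf_fuel L n.-1.+2 v1) ?(@cf_fuel L n.-1.+1 v1) //; lia.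
case: (cf_full L n.-1.+1 v1); first by rewrite E.
by move=> H; have := cf_size L n.-1.+2 v1; rewrite H; lia.
Qed.

Lemma v1_in : v1 \in pchain le L.
Proof. by have [s [-> _]] := pchain_eq; rewrite mem_head. Qed.

Lemma chain_min y : y \in pchain le L -> y = v1 \/ plt v1 y.
Proof.
have [s [-> [p _]]] := pchain_eq; rewrite inE => /orP[/eqP -> | ys]; first by left.
right; have := order_path_min plt_trans (sub_path (@srel_plt L) p).
by move/allP/(_ y ys).
Qed.

Lemma chain_pv y : promote_val le L y =
  if y \in pchain le L then (if Lsucc le L y is Some z then L z - 1 else n - 1)
  else L y - 1.
Proof.
rewrite /promote_val; case: ifP => // yc.
have [s [E [p hl]]] := pchain_eq; rewrite E in yc *.
set i := index y (v1 :: s).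
have iy : nth y (v1 :: s) i = y by rewrite nth_index.
have ilt : i < size (v1 :: s) by rewrite index_mem.
case: ifP => h.
  have h' : i < size s by move: h => /=.
  have /eqP := elimT (pathP y) p i h'; rewrite iy => -> //.
have -> : y = last v1 s.
  rewrite -iy /= in ilt h *; have -> : i = size s by lia.
  by rewrite -[size s]/((size (v1 :: s)).-1) nth_last.
by rewrite hl.
Qed.

Lemma chain_succ y z : y \in pchain le L -> Lsucc le L y = Some z -> z \in pchain le L.
Proof.
have [s [E [p hl]]] := pchain_eq; rewrite E => yc hz.
set i := index y (v1 :: s).
have iy : nth y (v1 :: s) i = y by rewrite nth_index.
have ilt : i < size (v1 :: s) by rewrite index_mem.
case: (ltnP i (size s)) => h.
  have /eqP := elimT (pathP y) p i h; rewrite iy hz => -[->].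
  by rewrite inE mem_nth ?orbT.
have ey : y = last v1 s.
  rewrite -iy; have -> : i = size s by move: ilt => /=; lia.
  by rewrite -[size s]/((size (v1 :: s)).-1) nth_last.
by rewrite ey hl in hz.
Qed.

Lemma chain_prev z : z \in pchain le L -> z != v1 ->
  exists2 y, y \in pchain le L & Lsucc le L y = Some z.
Proof.
have [s [E [p hl]]] := pchain_eq; rewrite E inE => /orP[->//|zs] _.
set j := index z s.
have jlt : j < size s by rewrite index_mem.
have jz : nth z s j = z by rewrite nth_index.
exists (nth z (v1 :: s) j); first by rewrite mem_nth //= ltnS ltnW.
by have /eqP := elimT (pathP z) p j jlt; rewrite jz.
Qed.

Lemma chain_last : exists2 y, y \in pchain le L & Lsucc le L y = None.
Proof.
have [s [E [p hl]]] := pchain_eq; exists (last v1 s) => //.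
by rewrite E mem_last.
Qed.

Lemma pv_lt y : promote_val le L y < n.
Proof.
have np := npos.
rewrite chain_pv; case: ifP => _; last by have := ltn_ord (L y); lia.
by case: (Lsucc le L y) => [z|]; [have := ltn_ord (L z)|]; lia.
Qed.

Lemma promoteE y : (promote le L y : nat) = promote_val le L y.
Proof. by rewrite /promote ffunE val_insubd pv_lt. Qed.

End ChainSpec.


Lemma exists_v1 (L : labeling T) : injective L -> 0 < n -> exists v1, L v1 = 0 :> nat.
Proof. by move=> inj np; have [y Hy] := lab_surj inj (Ordinal np); exists y; rewrite Hy. Qed.

Section Promote.
Variables (L : labeling T) (v1 : T).
Hypotheses (inj : injective L) (H0 : L v1 = 0 :> nat).

Lemma lab_pos y : y != v1 -> 0 < L y.
Proof.
move=> yv; rewrite lt0n; apply/negP => /eqP h; move/eqP: yv; apply.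
by apply: inj; apply: val_inj; rewrite /= h H0.
Qed.

Lemma succ_pos y z : y \in pchain le L -> Lsucc le L y = Some z -> 0 < L z.
Proof.
move=> yc /LsuccP[pyz _]; apply: lab_pos; apply/eqP => zv; subst z.
case: (chain_min inj H0 yc) => [yv|pvy]; first by subst y; rewrite plt_irr in pyz.
by have := plt_trans pvy pyz; rewrite plt_irr.
Qed.

Lemma promote_surj (i : 'I_n) : exists y, promote le L y = i.
Proof.
have np : 0 < n by apply/card_gt0P; exists v1.
case: (ltnP i n.-1) => hi.
  have hi1 : i.+1 < n by lia.
  have [w Hw] := lab_surj inj (Ordinal hi1).
  have wv : w != v1 by apply/eqP => e; subst w; move: H0; rewrite Hw.
  case wc: (w \in pchain le L).
    have [y yc Hy] := chain_prev inj H0 wc wv.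
    exists y; apply: ord_inj; rewrite /= (promoteE inj H0) (chain_pv inj H0) yc Hy Hw /=; lia.
  exists w; apply: ord_inj; rewrite /= (promoteE inj H0) (chain_pv inj H0) wc Hw /=; lia.
have [y yc Hy] := chain_last inj H0.
exists y; apply: ord_inj; rewrite /= (promoteE inj H0) (chain_pv inj H0) yc Hy.
have h2 : i < n := ltn_ord i. set m := #|T| in hi h2 *. lia.
Qed.

Lemma promote_inj : injective (promote le L).
Proof.
suff H : {in T &, injective (promote le L)} by move=> x y; apply: H.
apply/image_injP; rewrite eqn_leq leq_image_card /=.
apply: leq_trans (_ : #|'I_n| <= _); first by rewrite card_ord.
apply/subset_leq_card/subsetP => i _.
by have [y <-] := promote_surj i; apply: image_f.
Qed.

Definition good (M : labeling T) k :=
  forall x y, plt x y -> n - k <= M x -> M x < M y.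

Lemma promote_good k : good L k -> good (promote le L) k.+1.
Proof.
move=> g x y pxy; rewrite !(promoteE inj H0) !(chain_pv inj H0).
have lx := ltn_ord (L x); have ly := ltn_ord (L y).
case yc: (y \in pchain le L); case Ey: (Lsucc le L y) => [z2|].
- have Lz2 := ltn_ord (L z2); have z2p := succ_pos yc Ey.
  have [pyz2 _] := LsuccP Ey.
  case xc: (x \in pchain le L); case Ex: (Lsucc le L x) => [z|].
  + have [pxz zmin] := LsuccP Ex. have zp := succ_pos xc Ex.
    have Lz := ltn_ord (L z).
    move=> hz.
    have hz' : n - k <= L z by nlia T.
    case: (eqVneq y z) => [eyz|nyz].
      subst z; have := g _ _ pyz2 hz'; nlia T.
    have : L z < L y.
      rewrite ltn_neqAle zmin // andbT; apply/eqP => e.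
      by move/eqP: nyz; apply; apply: inj; apply: val_inj.
    move=> hzy; have := g _ _ pyz2 (_ : n - k <= L y); nlia T.
  + by move: (Lsucc_none Ex y); rewrite pxy.
  + have xp : 0 < L x by apply: lab_pos; apply/eqP => e; subst x; rewrite (v1_in inj H0) in xc.
    move=> hx.
    have := g _ _ (plt_trans pxy pyz2) (_ : n - k <= L x); nlia T.
  + have xp : 0 < L x by apply: lab_pos; apply/eqP => e; subst x; rewrite (v1_in inj H0) in xc.
    move=> hx.
    have := g _ _ (plt_trans pxy pyz2) (_ : n - k <= L x); nlia T.
- case xc: (x \in pchain le L); case Ex: (Lsucc le L x) => [z|].
  + have zp := succ_pos xc Ex; have := ltn_ord (L z); nlia T.
  + by move: (Lsucc_none Ex y); rewrite pxy.
  + have xp : 0 < L x by apply: lab_pos; apply/eqP => e; subst x; rewrite (v1_in inj H0) in xc.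
     nlia T.
  + have xp : 0 < L x by apply: lab_pos; apply/eqP => e; subst x; rewrite (v1_in inj H0) in xc.
     nlia T.
- have yv : y != v1 by apply/eqP => e; subst y; rewrite (v1_in inj H0) in yc.
  have yp := lab_pos yv.
  case xc: (x \in pchain le L); case Ex: (Lsucc le L x) => [z|].
  + have [pxz zmin] := LsuccP Ex. have zp := succ_pos xc Ex.
    move=> hz; have hz' : n - k <= L z by nlia T.
    have : L z <= L y := zmin _ pxy.
    case: (eqVneq y z) => [eyz|nyz]; first by subst z; rewrite (chain_succ inj H0 xc Ex) in yc.
    move=> hzy; have : (L z : nat) != L y.
      by apply/eqP => e; move/eqP: nyz; apply; apply: inj; apply: val_inj; rewrite /= e.
    nlia T.
  + by move: (Lsucc_none Ex y); rewrite pxy.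
  + have xp : 0 < L x by apply: lab_pos; apply/eqP => e; subst x; rewrite (v1_in inj H0) in xc.
    move=> hx; have := g _ _ pxy (_ : n - k <= L x); nlia T.
  + have xp : 0 < L x by apply: lab_pos; apply/eqP => e; subst x; rewrite (v1_in inj H0) in xc.
    move=> hx; have := g _ _ pxy (_ : n - k <= L x); nlia T.
- have yv : y != v1 by apply/eqP => e; subst y; rewrite (v1_in inj H0) in yc.
  have yp := lab_pos yv.
  case xc: (x \in pchain le L); case Ex: (Lsucc le L x) => [z|].
  + have [pxz zmin] := LsuccP Ex. have zp := succ_pos xc Ex.
    move=> hz; have hz' : n - k <= L z by nlia T.
    have : L z <= L y := zmin _ pxy.
    case: (eqVneq y z) => [eyz|nyz]; first by subst z; rewrite (chain_succ inj H0 xc Ex) in yc.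
    move=> hzy; have : (L z : nat) != L y.
      by apply/eqP => e; move/eqP: nyz; apply; apply: inj; apply: val_inj; rewrite /= e.
    nlia T.
  + by move: (Lsucc_none Ex y); rewrite pxy.
  + have xp : 0 < L x by apply: lab_pos; apply/eqP => e; subst x; rewrite (v1_in inj H0) in xc.
    move=> hx; have := g _ _ pxy (_ : n - k <= L x); nlia T.
  + have xp : 0 < L x by apply: lab_pos; apply/eqP => e; subst x; rewrite (v1_in inj H0) in xc.
    move=> hx; have := g _ _ pxy (_ : n - k <= L x); nlia T.
Qed.

End Promote.

Lemma iter_inj (L : labeling T) k : injective L -> injective (iter k (promote le) L).
Proof.
move=> inj; elim: k => //= k IH.
case: (posnP n) => [n0|np]; first by move=> x; have := ltn_ord (L x); nlia T.
have [v H] := exists_v1 IH np; exact: promote_inj IH H.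
Qed.

Lemma good_iter (L : labeling T) k : injective L -> good (iter k (promote le) L) k.
Proof.
move=> inj; elim: k => [|k IH] /=.
  by move=> x y _; have := ltn_ord (L x); nlia T.
have inj' := iter_inj (k:=k) inj.
case: (posnP n) => [n0|np]; first by move=> x; have := ltn_ord (L x); nlia T.
have [v H] := exists_v1 inj' np; exact (promote_good inj' H IH).
Qed.

Lemma linextP (M : labeling T) : reflect (forall x y, plt x y -> M x < M y) (is_linext le M).
Proof.
apply: (iffP forallP) => H x; first by move=> y pxy; exact: (implyP (forallP (H x) y)).
by apply/forallP => y; apply/implyP; exact: H.
Qed.

Lemma sort_time (L : labeling T) : injective L -> is_linext le (iter n.-1 (promote le) L).
Proof.
move=> inj; apply/linextP => x y pxy.
have inj' := iter_inj (k:=n.-1) inj; set M := iter _ _ _ in inj' *.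
have g := good_iter (k:=n.-1) inj.
case: (posnP (M x)) => h.
  rewrite h lt0n; apply/negP => /eqP h'.
  have : x = y by apply: inj'; apply: val_inj; rewrite /= h h'.
  by move=> e; subst y; rewrite plt_irr in pxy.
apply: g => //; rewrite -/M; nlia T.
Qed.

Lemma linext_mono (L : labeling T) : injective L -> is_linext le L -> is_linext le (promote le L).
Proof.
move=> inj /linextP H.
case: (posnP n) => [n0|np]; first by apply/linextP => x; have := ltn_ord (L x); nlia T.
have [v Hv] := exists_v1 inj np.
have g : good L n by move=> x y pxy _; exact: H.
have g' := promote_good inj Hv g.
by apply/linextP => x y pxy; apply: g' => //; nlia T.
Qed.

Lemma linext_iter (L : labeling T) k : injective L -> n.-1 <= k -> is_linext le (iter k (promote le) L).
Proof.
move=> inj; elim: k => [|k IH] hk.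
  by have := sort_time inj; have -> : n.-1 = 0 by lia.
case: (eqVneq n.-1 k.+1) => [<-|ne]; first exact: sort_time.
rewrite iterS; apply: linext_mono; first exact: iter_inj.
by apply: IH; lia.
Qed.

Definition closedC (C : {set T}) := forall a b, plt a b -> (a \in C) = (b \in C).

Lemma rot_step (L : labeling T) (C : {set T}) : injective L -> closedC C -> forall x,
  exists y, (x \in C) = (y \in C) /\ (L y : nat) = (promote le L x + 1) %% n.
Proof.
move=> inj cC x.
have np : 0 < n by apply/card_gt0P; exists x.
have [v1 H0] := exists_v1 inj np.
rewrite (promoteE inj H0) (chain_pv inj H0).
have lx := ltn_ord (L x).
case xc: (x \in pchain le L); last first.
  have xp : 0 < L x by apply: (lab_pos inj H0); apply/eqP => e; subst x; rewrite (v1_in inj H0) in xc.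
  exists x; split => //; rewrite modn_small; nlia T.
case Ex: (Lsucc le L x) => [z|].
  have zp := succ_pos inj H0 xc Ex; have [pxz _] := LsuccP Ex.
  exists z; split; first exact: cC.
  have := ltn_ord (L z) => lz; rewrite modn_small; nlia T.
exists v1; split.
  by case: (chain_min inj H0 xc) => [->//|pv]; rewrite (cC _ _ pv).
rewrite H0; have -> : n - 1 + 1 = n by nlia T.
by rewrite modnn.
Qed.

Lemma rot_iter (L : labeling T) (C : {set T}) : injective L -> closedC C -> forall t x,
  exists y, (x \in C) = (y \in C) /\ (L y : nat) = (iter t (promote le) L x + t) %% n.
Proof.
move=> inj cC; elim=> [|t IH] x.
  by exists x; split => //; rewrite addn0 modn_small.
rewrite iterS.
have [y1 [s1 e1]] := rot_step (iter_inj (k:=t) inj) cC x.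
have [y [s2 e2]] := IH y1.
exists y; split; first by rewrite s1 s2.
by rewrite e2 e1 modnDml addn1 addSnnS.
Qed.

End Basic.

Lemma lt_pred a b : 0 < a -> 0 < b -> (a - 1 < b - 1) = (a < b).
Proof. move=> ha hb; apply/idP/idP; lia. Qed.

Lemma card_lt_ord m k : k <= m -> #|[set i : 'I_m | i < k]| = k.
Proof.
move=> hk; have wi : injective (widen_ord hk).
  by move=> a b /(congr1 val) /= e; apply: val_inj.
rewrite -[k in RHS]card_ord -cardsT -(card_imset _ wi).
  apply: eq_card => i; rewrite inE; apply/idP/imsetP => [hi|[j _ ->]] /=.
    by exists (Ordinal hi) => //; apply: val_inj.
  exact: ltn_ord.
Qed.

Lemma rank_id (U : finType) (tau : labeling U) (x : U) : injective tau ->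
  #|[set y | tau y < tau x]| = tau x.
Proof.
move=> inj; rewrite -(card_imset _ inj) -[RHS](@card_lt_ord #|U|) ?(ltnW (ltn_ord _)) //.
apply: eq_card => i; rewrite inE; apply/imsetP/idP => [[y]|hi].
  by rewrite inE => h ->.
by have [y hy] := lab_surj inj i; exists y; rewrite ?inE hy.
Qed.

Section Restr.
Variables (T : finType) (le : rel T) (C : {set T}).
Hypothesis Hpo : is_poset le.
Local Notation S := {x : T | x \in C}.
Local Notation leS := (restr le C).
Local Notation n := #|T|.

Lemma restr_poset : is_poset leS.
Proof.
case: Hpo => r a t; split.
- by move=> x; exact: r.
- by move=> x y h; apply: val_inj; exact: a.
- by move=> x y z; exact: t.
Qed.

Lemma plt_restr (a b : S) : plt leS a b = plt le (val a) (val b).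
Proof. by rewrite /Defs.plt /restr (inj_eq val_inj). Qed.

Definition rk (L : labeling T) (x : S) := #|[set y : S | L (val y) < L (val x)]|.

Lemma rk_lt (L : labeling T) x : rk L x < #|{: S}|.
Proof.
apply: (@leq_trans #|[set: S]|); last by rewrite cardsT.
apply: proper_card; rewrite properT; apply/eqP => e.
have : x \in [set y : S | L (val y) < L (val x)] by rewrite e inE.
by rewrite inE ltnn.
Qed.

Definition std (L : labeling T) : labeling S := [ffun x => Ordinal (rk_lt L x)].

Lemma stdE (L : labeling T) x : (std L x : nat) = rk L x.
Proof. by rewrite ffunE. Qed.

Lemma std_lt (L : labeling T) (x y : S) : injective L -> (std L x < std L y) = (L (val x) < L (val y)).
Proof.
move=> inj; rewrite !stdE /rk.
case: (ltngtP (L (val x)) (L (val y))) => h.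
- apply: proper_card; apply/properP; split.
    by apply/subsetP => z; rewrite !inE => hz; exact: ltn_trans hz h.
  by exists x; rewrite !inE ?ltnn.
- apply/negbTE; rewrite -leqNgt; apply: subset_leq_card; apply/subsetP => z.
  by rewrite !inE => hz; exact: ltn_trans hz h.
- have : x = y by apply: val_inj; apply: inj; apply: val_inj.
  by move=> ->; rewrite ltnn.
Qed.

Lemma std_inj (L : labeling T) : injective L -> injective (std L).
Proof.
move=> inj x y e; apply/eqP; apply: contraT => nxy.
have : (L (val x) : nat) != L (val y).
  apply: contra nxy => /eqP h; apply/eqP; apply: val_inj; apply: inj; exact: val_inj.
by rewrite neq_ltn -!std_lt // e ltnn.
Qed.

Lemma std_linext1 (M : labeling T) : injective M -> is_linext le M -> is_linext leS (std M).
Proof.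
move=> inj /linextP H; apply/linextP => x y; rewrite plt_restr std_lt //; exact: H.
Qed.

Lemma std_linext2 (M : labeling T) (x y : S) : injective M -> plt le (val x) (val y) ->
  ~~ (M (val x) < M (val y)) -> ~~ is_linext leS (std M).
Proof.
move=> inj p h; apply/negP => /linextP H; move: (H x y); rewrite plt_restr std_lt //.
by move=> /(_ p); apply/negP.
Qed.

Hypothesis cC : closedC le C.

Lemma Lsucc_std (L : labeling T) (x : S) : injective L ->
  Lsucc le L (val x) = omap val (Lsucc leS (std L) x).
Proof.
move=> inj; case E: (Lsucc leS (std L) x) => [z|] /=.
  have [pz zm] := LsuccP E; rewrite plt_restr in pz.
  apply: Lsucc_eq => // w pw.
  have wC : w \in C by rewrite -(cC pw) (valP x).
  have := zm (exist _ w wC); rewrite plt_restr => /(_ pw).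
  by rewrite leqNgt std_lt // -leqNgt.
case E': (Lsucc le L (val x)) => [z0|] //.
have [pz _] := LsuccP E'.
have zC : z0 \in C by rewrite -(cC pz) (valP x).
by move: (Lsucc_none E (exist _ z0 zC)); rewrite plt_restr pz.
Qed.

Lemma chain_std (L : labeling T) k (x : S) : injective L ->
  map val (chain_from leS (std L) k x) = chain_from le L k (val x).
Proof.
move=> inj; elim: k x => [|k IH] x //=.
rewrite (Lsucc_std x inj); case: (Lsucc leS (std L) x) => [z|] //=.
by rewrite IH.
Qed.

Section WithV1.
Variables (L : labeling T) (v1 : T).
Hypotheses (inj : injective L) (H0 : L v1 = 0 :> nat) (v1C : v1 \in C).

Let v1' : S := exist _ v1 v1C.

Lemma std_v1 : std L v1' = 0 :> nat.
Proof.
rewrite stdE /rk; apply/eqP; rewrite cards_eq0; apply/eqP/setP => y.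
by rewrite !inE /= H0 ltn0.
Qed.

Lemma pchain_std : map val (pchain leS (std L)) = pchain le L.
Proof.
have sinj := std_inj inj.
rewrite /pchain; case: pickP => [v /eqP Hv|H]; last first.
  by move: (H v1'); rewrite /= std_v1 eqxx.
have -> : v = v1' by apply: sinj; apply: val_inj; rewrite /= Hv std_v1.
case: pickP => [w /eqP Hw|H]; last by move: (H v1); rewrite /= H0 eqxx.
have -> : w = v1 by apply: inj; apply: val_inj; rewrite /= Hw H0.
rewrite -(@cf_fuel _ _ restr_poset (std L) n v1').
  by rewrite chain_std.
by rewrite card_sig; exact: max_card.
Qed.

Lemma mem_std (u : S) : (val u \in pchain le L) = (u \in pchain leS (std L)).
Proof. by rewrite -pchain_std (mem_map val_inj). Qed.

Definition F (u : S) : option S :=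
  if u \in pchain leS (std L) then Lsucc leS (std L) u else Some u.

Lemma FE u : [/\ (promote le L (val u) : nat) =
    (if F u is Some z then L (val z) - 1 else n - 1),
  (promote leS (std L) u : nat) =
    (if F u is Some z then std L z - 1 else #|{: S}| - 1) &
  (if F u is Some z then 0 < L (val z) /\ 0 < std L z else True)].
Proof.
have sinj := std_inj inj.
rewrite (promoteE Hpo inj H0) (promoteE restr_poset sinj std_v1).
rewrite (chain_pv Hpo inj H0) (chain_pv restr_poset sinj std_v1) mem_std /F.
case uc: (u \in pchain leS (std L)).
  rewrite (Lsucc_std u inj).
  case E: (Lsucc leS (std L) u) => [z|] //=; split => //.
  have zp := succ_pos restr_poset sinj std_v1 uc E; split => //.
  apply: (lab_pos inj H0); apply/eqP => e.
  have ez : z = v1' by apply: val_inj.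
  by move: zp; rewrite ez std_v1.
split => //; split.
  apply: (lab_pos inj H0); apply/eqP => e.
  have eu : u = v1' by apply: val_inj.
  by move: uc; rewrite eu -mem_std /= (v1_in Hpo inj H0).
apply: (lab_pos sinj std_v1); apply/eqP => eu.
by move: uc; rewrite eu -mem_std /= (v1_in Hpo inj H0).
Qed.

Lemma std_promote : std (promote le L) = promote leS (std L).
Proof.
have sinj := std_inj inj.
apply/ffunP => x; apply: ord_inj; rewrite stdE /rk.
rewrite -(rank_id x (promote_inj restr_poset sinj std_v1)).
apply: eq_card => y; rewrite !inE.
have [ey1 ey2 ey3] := FE y; have [ex1 ex2 ex3] := FE x.
rewrite ey1 ey2 ex1 ex2.
have lS : #|{: S}| <= n by rewrite card_sig; exact: max_card.
case: (F y) ey3 => [a [ha1 ha2]|t1]; case: (F x) ex3 => [b [hb1 hb2]|t2].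
- by rewrite !lt_pred // std_lt.
- have h1 := ltn_ord (L (val a)); have h2 := ltn_ord (std L a).
  apply/idP/idP => hh.
  + by apply: ltn_sub2r => //; exact: leq_ltn_trans ha2 h2.
  + by apply: ltn_sub2r => //; exact: leq_ltn_trans ha1 h1.
- have h1 := ltn_ord (L (val b)); have h2 := ltn_ord (std L b).
  apply/idP/idP => hh; exfalso.
  + by move: hh; rewrite ltnNge leq_sub2r // ltnW.
  + by move: hh; rewrite ltnNge leq_sub2r // ltnW.
- by rewrite !ltnn.
Qed.

End WithV1.

Lemma std_stay (L : labeling T) (v1 : T) : injective L -> L v1 = 0 :> nat -> v1 \notin C ->
  std (promote le L) = std L.
Proof.
move=> inj H0 v1C.
have notc (u : S) : val u \notin pchain le L.
  apply/negP => uc; case: (chain_min Hpo inj H0 uc) => [e|p].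
    by move: v1C; rewrite -e (valP u).
  by move: v1C; rewrite (cC p) (valP u).
have pos (u : S) : 0 < L (val u).
  apply: (lab_pos inj H0); apply/eqP => e; by move: v1C; rewrite -e (valP u).
apply/ffunP => x; apply: ord_inj; rewrite !stdE /rk.
apply: eq_card => y; rewrite !inE.
rewrite !(promoteE Hpo inj H0) !(chain_pv Hpo inj H0) (negbTE (notc x)) (negbTE (notc y)).
by rewrite lt_pred.
Qed.

End Restr.

Section Main.
Variables (T : finType) (le : rel T).
Hypothesis Hpo : is_poset le.
Local Notation n := #|T|.

Lemma linext_from (L : labeling T) k j : injective L -> k <= j ->
  is_linext le (iter k (promote le) L) -> is_linext le (iter j (promote le) L).
Proof.
move=> inj; elim: j => [|j IH] hkj hl.
  have e : k = 0 by lia.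
  by rewrite e in hl.
case: (eqVneq k j.+1) => [<-//|ne].
rewrite iterS; apply: (linext_mono Hpo); first exact: (iter_inj Hpo).
by apply: IH => //; lia.
Qed.

Definition cnt (C : {set T}) (L : labeling T) t := #|[set y in C | L y < t]|.

Lemma cnt0 C L : cnt C L 0 = 0.
Proof. by apply/eqP; rewrite cards_eq0; apply/eqP/setP => y; rewrite !inE ltn0 andbF. Qed.

Lemma cnt_step C (L : labeling T) t y : injective L -> (L y : nat) = t ->
  cnt C L t.+1 = cnt C L t + (y \in C).
Proof.
move=> inj Hy; rewrite /cnt.
case yC: (y \in C).
  have -> : [set z in C | L z < t.+1] = y |: [set z in C | L z < t].
    apply/setP => z; rewrite !inE ltnS leq_eqVlt.
    case: (eqVneq z y) => [->|nzy]; first by rewrite yC Hy eqxx.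
    have : (L z : nat) != t.
      by rewrite -Hy; apply: contra nzy => /eqP e; apply/eqP; apply: inj; apply: val_inj.
    by move/negbTE => ->.
  by rewrite cardsU1 !inE Hy ltnn andbF addn1 add1n.
rewrite addn0; apply: eq_card => z; rewrite !inE ltnS leq_eqVlt.
case: (eqVneq z y) => [->|nzy]; first by rewrite yC.
have : (L z : nat) != t.
  by rewrite -Hy; apply: contra nzy => /eqP e; apply/eqP; apply: inj; apply: val_inj.
by move/negbTE => ->.
Qed.

Lemma std_iter (C : {set T}) (L : labeling T) t : closedC le C -> injective L -> t <= n ->
  std C (iter t (promote le) L) = iter (cnt C L t) (promote (restr le C)) (std C L).
Proof.
move=> cC inj; elim: t => [|t IH] ht; first by rewrite cnt0.
have inj' := iter_inj Hpo (k:=t) inj.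
have np : 0 < n by lia.
have [v1 H0] := exists_v1 inj' np.
have [y [sy ey]] := rot_iter Hpo inj cC t v1.
move: ey; rewrite H0 add0n modn_small; last by lia.
move=> ey; rewrite (cnt_step C inj ey) iterS.
case v1C: (v1 \in C).
  rewrite (std_promote Hpo cC inj' H0 v1C) IH; last by lia.
  by rewrite -sy v1C addn1 iterS.
rewrite (std_stay Hpo cC inj' H0 (negbT v1C)) IH; last by lia.
by rewrite -sy v1C addn0.
Qed.

Lemma hasse_sym : symmetric (hasse le).
Proof. by move=> x y; rewrite /hasse orbC. Qed.

Lemma plt_connect x y : plt le x y -> connect (hasse le) x y.
Proof.
have [k Hk] : exists k, #|[set z | plt le x z && plt le z y]| < k.
  by exists #|[set z | plt le x z && plt le z y]|.+1.
elim: k x y Hk => [//|k IH] x y Hk pxy.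
case E: [forall z, ~~ (plt le x z && plt le z y)].
  by apply: connect1; rewrite /hasse /covers pxy E.
case/forallPn: (negbT E) => z /negPn /andP[pxz pzy].
have sub1 : [set w | plt le x w && plt le w z] \proper [set w | plt le x w && plt le w y].
  apply/properP; split.
    apply/subsetP => w; rewrite !inE => /andP[a b]; rewrite a /=.
    exact: (plt_trans Hpo b pzy).
  by exists z; rewrite !inE ?pxz ?pzy // plt_irr andbF.
have sub2 : [set w | plt le z w && plt le w y] \proper [set w | plt le x w && plt le w y].
  apply/properP; split.
    apply/subsetP => w; rewrite !inE => /andP[a b]; rewrite b andbT.
    exact: (plt_trans Hpo pxz a).
  by exists z; rewrite !inE ?pxz ?pzy // plt_irr.
apply: (@connect_trans _ _ z).
  by apply: IH pxz; have := proper_card sub1; lia.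
by apply: IH pzy; have := proper_card sub2; lia.
Qed.

Lemma comp_closed C : C \in components le -> closedC le C.
Proof.
case/imsetP => x0 _ -> a b pab.
have cab := plt_connect pab.
have cba : connect (hasse le) b a by rewrite (sym_connect_sym hasse_sym).
rewrite !inE; apply/idP/idP => h; exact: connect_trans h _.
Qed.

Lemma comps_partition : partition (components le) [set: T].
Proof.
have eqR : {in [set: T] & &, equivalence_rel (connect (hasse le))}.
  move=> x y z _ _ _; split; first exact: connect0.
  move=> cxy; have cyx : connect (hasse le) y x by rewrite (sym_connect_sym hasse_sym).
  by apply/idP/idP => h; [exact: connect_trans cyx h | exact: connect_trans cxy h].
have -> : components le = equivalence_partition (connect (hasse le)) [set: T].
  apply/setP => A; apply/imsetP/imsetP => -[x _ ->]; exists x => //;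
  by apply/setP => y; rewrite !inE.
exact: equivalence_partitionP.
Qed.

Lemma comp_sum : \sum_(C in components le) #|C| = n.
Proof. by rewrite -(card_partition comps_partition) cardsT. Qed.

Lemma comp_pos C : C \in components le -> 0 < #|C|.
Proof. by case/imsetP => x _ ->; apply/card_gt0P; exists x; rewrite inE connect0. Qed.

End Main.

Lemma union_bound (U X : finType) (A : {set U}) (P : {set X}) (B : X -> {set U}) :
  (forall u, u \in A -> exists2 p, p \in P & u \in B p) -> #|A| <= \sum_(p in P) #|B p|.
Proof.
move=> cov; rewrite -sum1_card.
apply: (@leq_trans (\sum_(u in A) \sum_(p in P) (u \in B p))).
  apply: leq_sum => u uA; have [p pP upB] := cov u uA.
  by rewrite (bigD1 p) //= upB.
rewrite exchange_big /=; apply: leq_sum => p _.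
rewrite big_mkcond /= -sum1_card [X in _ <= X]big_mkcond /=.
by apply: leq_sum => u _; case: (u \in A); case: (u \in B p).
Qed.

Lemma arith c m : 0 < c -> c <= m -> 2 <= m ->
  (c.-1)`! * (m - 2) ^_ (m - c) <= (c - 1) * (m - 2)`!.
Proof.
case: c => [//|c] _; case: c => [|c] hc hm.
  rewrite ffact_small ?muln0 //; lia.
have h : m - c.+2 <= m - 2 by lia.
rewrite -(ffact_fact h) (_ : m - 2 - (m - c.+2) = c); last by lia.
rewrite /= factS (_ : c.+2 - 1 = c.+1); last by lia.
by rewrite -mulnA [c`! * _]mulnC.
Qed.

Section Count.
Variables (T : finType) (le : rel T).
Hypothesis Hpo : is_poset le.
Local Notation n := #|T|.

Definition Aset (C : {set T}) := [set L : labeling T | [&& tangled le L,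
   [forall y, (#|T| - 2 <= L y) ==> (y \in C)] & tangled (restr le C) (std C L)]].

Lemma tangled_comp (L : labeling T) : 2 <= n -> tangled le L ->
  exists2 C, C \in components le & L \in Aset C.
Proof.
move=> n2 tg; have tg0 := tg.
case/and3P: tg => /injectiveP inj hlin /forallP hnot.
have hk : n.-2 < n.-1 by lia.
have nlin := hnot (Ordinal hk); rewrite /= in nlin.
case/forallPn: nlin => x /forallPn [y]; rewrite negb_imply => /andP[pxy hxy].
set C := [set z | connect (hasse le) x z].
have Ccomp : C \in components le by apply: imset_f.
have cC := comp_closed Hpo Ccomp.
have xC : x \in C by rewrite inE connect0.
have yC : y \in C by rewrite inE; exact: plt_connect.
exists C => //.
pose x' : {z : T | z \in C} := exist _ x xC.
pose y' : {z : T | z \in C} := exist _ y yC.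
have sinj : injective (std C L) := std_inj (C:=C) inj.
have E1 : std C (iter n.-2 (promote le) L) =
    iter (cnt C L n.-2) (promote (restr le C)) (std C L).
  by apply: std_iter => //; lia.
have nl : ~~ is_linext (restr le C) (iter (cnt C L n.-2) (promote (restr le C)) (std C L)).
  rewrite -E1; apply: (@std_linext2 _ _ _ _ x' y') => //.
  exact: (iter_inj Hpo).
have rp := restr_poset C Hpo.
set m := #|{: {z : T | z \in C}}|.
have Alt : cnt C L n.-2 < m.-1.
  rewrite ltnNge; apply/negP => h; move/negP: nl; apply.
  apply: (linext_from rp sinj h); exact: (sort_time rp sinj).
have cn : cnt C L n = #|C|.
  by apply: eq_card => z; rewrite !inE ltn_ord andbT.
have mC : m = #|C| by rewrite /m card_sig.
have h0 : n.-2 < n by lia.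
have h1 : n.-1 < n by lia.
have [y0 Hy0] := lab_surj inj (Ordinal h0).
have [y1 Hy1] := lab_surj inj (Ordinal h1).
have c1 : cnt C L n.-1 = cnt C L n.-2 + (y0 \in C).
  have e : n.-1 = n.-2.+1 by lia.
  by rewrite e; apply: cnt_step => //; rewrite Hy0.
have c2 : cnt C L n = cnt C L n.-1 + (y1 \in C).
  have e : n = n.-1.+1 by lia.
  by rewrite [in LHS]e; apply: cnt_step => //; rewrite Hy1.
have [y0C y1C] : y0 \in C /\ y1 \in C.
  clearbody m; set N := #|T| in Alt c1 c2 cn; move: c1 c2; case: (y0 \in C); case: (y1 \in C) => /= c1 c2; split => //; exfalso; lia.
have Am : cnt C L n.-2 = m.-2.
  clearbody m; set N := #|T| in Alt c1 c2 cn *; move: c1 c2; rewrite y0C y1C /= => c1 c2; lia.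
rewrite inE tg0 /=; apply/andP; split.
  apply/forallP => z; apply/implyP => hz.
  have : (L z : nat) = n.-2 \/ (L z : nat) = n.-1.
    by have := ltn_ord (L z); set N := #|T| in hz *; lia.
  case=> e.
    by have -> : z = y0 by apply: inj; apply: val_inj; rewrite /= Hy0 e.
  by have -> : z = y1 by apply: inj; apply: val_inj; rewrite /= Hy1 e.
apply/and3P; split.
- by apply/injectiveP.
- exact: (sort_time rp sinj).
- apply/forallP => k; apply/negP => hl.
  have hk' : (k : nat) < m.-1 := ltn_ord k.
  move/negP: nl; apply; rewrite Am.
  apply: (linext_from rp sinj _ hl); lia.
Qed.

Lemma g_inj (C : {set T}) (L1 L2 : labeling T) : injective L1 -> injective L2 ->
  std C L1 = std C L2 -> (forall y, y \notin C -> L1 y = L2 y) -> L1 = L2.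
Proof.
move=> i1 i2 es hout.
suff H : forall l a, (L1 a : nat) = l -> (L2 a : nat) = l.
  by apply/ffunP => a; apply: ord_inj; exact: esym (H _ a erefl).
elim/ltn_ind => l IH a Ha.
case aC: (a \in C); last by rewrite -(hout a (negbT aC)).
have [b Hb] := lab_surj i2 (L1 a).
case: (eqVneq b a) => [eba|nba]; first by rewrite -Ha -Hb eba.
exfalso.
have bC : b \in C.
  apply/negPn/negP => bC; move/eqP: nba; apply; apply: i1; by rewrite hout // Hb.
have Lab : (L1 a : nat) < L1 b.
  rewrite ltn_neqAle; apply/andP; split.
    apply/eqP => e; move/eqP: nba; apply; apply: i1; apply: val_inj; by rewrite /= e.
  rewrite leqNgt; apply/negP => h.
  have hb : (L1 b : nat) < l by rewrite -Ha.
  have := IH _ hb b erefl; rewrite Hb => e; by move: h; rewrite e ltnn.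
pose a' : {z : T | z \in C} := exist _ a aC.
pose b' : {z : T | z \in C} := exist _ b bC.
have : (L2 a : nat) < L2 b.
  have := std_lt a' b' i1; rewrite Lab es std_lt //.
have [a2 Ha2] := lab_surj i1 (L2 a).
rewrite Hb => h.
have ha : (L2 a : nat) < l by rewrite -Ha.
have ha2 : (L1 a2 : nat) = L2 a by rewrite Ha2.
have := IH _ ha a2 ha2.
move=> e; have ea : a2 = a by apply: i2; apply: val_inj; rewrite /= e.
by move: h; rewrite -Ha2 ea ltnn.
Qed.

Lemma count_C (C : {set T}) : 2 <= n ->
  #|Aset C| <= ntangled (restr le C) * (n - 2) ^_ (n - #|C|).
Proof.
move=> n2.
pose D := {x : T | x \notin C}.
pose R := [set i : 'I_n | i < n - 2].
pose g (L : labeling T) : labeling {x : T | x \in C} * {ffun D -> 'I_n} :=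
  (std C L, [ffun d : D => L (val d)]).
have ginj : {in Aset C &, injective g}.
  move=> L1 L2; rewrite !inE => /and3P[/and3P[/injectiveP i1 _ _] _ _].
  move=> /and3P[/and3P[/injectiveP i2 _ _] _ _] [e1 e2].
  apply: g_inj i1 i2 e1 _ => y yC.
  by have := congr1 (fun f : {ffun D -> 'I_n} => f (exist _ y yC : D)) e2; rewrite !ffunE.
rewrite -(card_in_imset ginj).
have sub : g @: Aset C \subset setX [set s : labeling {x : T | x \in C} | tangled (restr le C) s]
    [set f : {ffun D -> 'I_n} in ffun_on R | injectiveb f].
  apply/subsetP => p /imsetP[L]; rewrite inE => /and3P[/and3P[/injectiveP inj _ _] hf ht] ->.
  rewrite !inE ht /=; apply/andP; split.
    apply/ffun_onP => d; rewrite ffunE inE ltnNge; apply/negP => h.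
    by have := implyP (forallP hf (val d)) h; rewrite (negbTE (valP d)).
  by apply/injectiveP => d1 d2; rewrite !ffunE => e; apply: val_inj; exact: inj.
apply: leq_trans (subset_leq_card sub) _.
rewrite cardsX card_inj_ffuns_on card_lt_ord; last by lia.
have -> : #|{: D}| = n - #|C|.
  rewrite card_sig; have := cardsC C.
  rewrite (@eq_card _ [pred x | x \notin C] (~: C)); first by lia.
  by move=> x; rewrite !inE.
by [].
Qed.

End Count.

Unset Implicit Arguments.

Theorem mainTheorem11 (T : finType) (le : rel T) (Hpo : is_poset le)
  (Hn : 2 <= #|T|) :
  (forall C : {set T}, C \in components le ->
     ntangled (restr le C) <= (#|C|.-1)`!) ->
  ntangled le <= (#|T| - #|components le|) * (#|T| - 2)`!.
Proof.
move=> hyp.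
have step1 : ntangled le <= \sum_(C in components le) #|Aset le C|.
  apply: union_bound => L; rewrite inE => tg.
  exact: (tangled_comp Hpo Hn tg).
apply: leq_trans step1 _.
apply: (@leq_trans (\sum_(C in components le) (#|C| - 1) * (#|T| - 2)`!)).
  apply: leq_sum => C hC.
  apply: leq_trans (count_C le C Hn) _.
  apply: leq_trans (arith (comp_pos hC) (max_card _) Hn).
  by apply: leq_mul => //; exact: hyp.
rewrite -big_distrl /= leq_mul2r; apply/orP; right.
have e : \sum_(C in components le) (#|C| - 1) + #|components le| = #|T|.
  rewrite -(comp_sum le) -sum1_card -big_split /=.
  by apply: eq_bigr => C hC; rewrite subnK // (comp_pos hC).
by rewrite -e addnK.
Qed.
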